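(* Assume CH. Let $\mathcal{I}$ be a $\sigma$-ideal on $\mathbb{R}$ satisfying the standing assumptions, and let $n\geq 1$ be an integer. Then there exists an $\mathcal{I}$-Luzin set $L\subseteq\mathbb{R}$ such that the $n$-fold Minkowski sum $\bigoplus^{n}L=\underbrace{L+\cdots+L}_{n}$ is an $\mathcal{I}$-Luzin set and $\bigoplus^{n+1}L=\mathbb{R}$.
   Context: Standing assumptions on $\mathcal{I}$: $\mathcal{I}$ is a $\sigma$-ideal of subsets of $\mathbb{R}$ such that $\mathbb{R}\notin\mathcal{I}$; $x+I\in\mathcal{I}$ and $xI\in\mathcal{I}$ for all $x\in\mathbb{R}$, $I\in\mathcal{I}$; every member of $\mathcal{I}$ is contained in a Borel member of $\mathcal{I}$; and for all Borel $A,B\notin\mathcal{I}$ the set $A-B$ has nonempty interior. A set $L\subseteq\mathbb{R}$ is $\mathcal{I}$-Luzin if $|L|=\mathfrak{c}$ and $L\cap I$ is countable for every $I\in\mathcal{I}$. Minkowski sum: $A+B=\{a+b:a\in A,b\in B\}$. *)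

(* Defs.v *)
From Stdlib Require Import Reals.
Open Scope R_scope.

Definition subset (A B : R -> Prop) : Prop := forall x, A x -> B x.

Inductive borel : (R -> Prop) -> Prop :=
  | borel_open : forall A, open_set A -> borel A
  | borel_compl : forall A, borel A -> borel (fun x => ~ A x)
  | borel_cunion : forall f : nat -> R -> Prop,
      (forall n, borel (f n)) -> borel (fun x => exists n, f n x).

(* countable = injects into nat (includes finite and empty) *)
Definition countable (S : R -> Prop) : Prop :=
  exists f : R -> nat, forall x y, S x -> S y -> f x = f y -> x = y.

Definition card_continuum (S : R -> Prop) : Prop :=
  exists f : R -> R, (forall x, S (f x)) /\
    (forall x y, f x = f y -> x = y) /\
    (forall y, S y -> exists x, f x = y).

Definition CH : Prop :=
  forall S : R -> Prop, countable S \/ card_continuum S.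

Definition sigma_ideal (I : (R -> Prop) -> Prop) : Prop :=
  I (fun _ => False) /\
  (forall A B, subset A B -> I B -> I A) /\
  (forall f : nat -> R -> Prop, (forall n, I (f n)) -> I (fun x => exists n, f n x)).

Definition translate (x : R) (A : R -> Prop) : R -> Prop :=
  fun z => exists y, A y /\ z = x + y.
Definition dilate (x : R) (A : R -> Prop) : R -> Prop :=
  fun z => exists y, A y /\ z = x * y.

Definition minkowski (A B : R -> Prop) : R -> Prop :=
  fun z => exists a b, A a /\ B b /\ z = a + b.
Definition difference (A B : R -> Prop) : R -> Prop :=
  fun z => exists a b, A a /\ B b /\ z = a - b.

Definition nonempty_interior (A : R -> Prop) : Prop :=
  exists a b, a < b /\ forall z, a < z < b -> A z.

Definition standing_assumptions (I : (R -> Prop) -> Prop) : Prop :=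
  sigma_ideal I /\
  ~ I (fun _ => True) /\
  (forall x A, I A -> I (translate x A)) /\
  (forall x A, I A -> I (dilate x A)) /\
  (forall A, I A -> exists B, borel B /\ I B /\ subset A B) /\
  (forall A B, borel A -> borel B -> ~ I A -> ~ I B ->
     nonempty_interior (difference A B)).

Definition luzin (I : (R -> Prop) -> Prop) (L : R -> Prop) : Prop :=
  card_continuum L /\ forall A, I A -> countable (fun x => L x /\ A x).

(* n-fold Minkowski sum: nsum 0 L = {0}, nsum (m+1) L = nsum m L + L,
   so nsum n L = L + ... + L (n times) for n >= 1. *)
Fixpoint nsum (n : nat) (L : R -> Prop) : R -> Prop :=
  match n with
  | O => fun z => z = 0
  | S m => minkowski (nsum m L) L
  end.

(* Main.v *)
From Stdlib Require Import Reals Lra.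
From HB Require Import structures.
From mathcomp Require Import ssreflect ssrfun ssrbool eqtype boolp wochoice.

Require Import Defs.
From Stdlib Require Import Lia Classical ClassicalEpsilon FunctionalExtensionality PropExtensionality Cantor Inverse_Image ZArith.
Open Scope R_scope.

Definition ctbl {T : Type} (P : T -> Prop) : Prop :=
  exists f : T -> nat, forall x y, P x -> P y -> f x = f y -> x = y.

Lemma ctbl_sub {T} (P Q : T -> Prop) : (forall x, P x -> Q x) -> ctbl Q -> ctbl P.
Proof. intros H [f Hf]; exists f; intros; apply Hf; auto. Qed.

Section SA.
Lemma I_sig I : standing_assumptions I -> sigma_ideal I.
Proof. intros H; apply H. Qed.
Lemma I_full I : standing_assumptions I -> ~ I (fun _ => True).
Proof. intros H; apply H. Qed.
Lemma I_transl I : standing_assumptions I -> forall x A, I A -> I (translate x A).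
Proof. intros H; apply H. Qed.
Lemma I_dil I : standing_assumptions I -> forall x A, I A -> I (dilate x A).
Proof. intros H; apply H. Qed.
Lemma I_cover I : standing_assumptions I -> forall A, I A -> exists B, borel B /\ I B /\ subset A B.
Proof. intros H; apply H. Qed.
Lemma I_int I : standing_assumptions I -> forall A B, borel A -> borel B -> ~ I A -> ~ I B ->
     nonempty_interior (difference A B).
Proof. intros H; apply H. Qed.
End SA.

Lemma I_mono I : standing_assumptions I -> forall A B : R -> Prop, (forall x, A x -> B x) -> I B -> I A.
Proof. intros H A B HAB HB. destruct (I_sig I H) as [_ [Hm _]]. exact (Hm A B HAB HB). Qed.

Lemma I_empty I : standing_assumptions I -> forall A : R -> Prop, (forall x, ~ A x) -> I A.
Proof. intros H A HA. destruct (I_sig I H) as [H0 _]. apply (I_mono I H A (fun _ => False)); [intros x Hx; apply (HA x Hx) | exact H0]. Qed.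

Lemma I_unat I : standing_assumptions I -> forall f : nat -> R -> Prop, (forall n, I (f n)) ->
  I (fun x => exists n, f n x).
Proof. intros H. destruct (I_sig I H) as [_ [_ Hu]]. exact Hu. Qed.

Lemma I_uctbl I (HI : standing_assumptions I) {T : Type} (P : T -> Prop) (S : T -> R -> Prop) :
  ctbl P -> (forall t, P t -> I (S t)) -> I (fun z => exists t, P t /\ S t z).
Proof.
  intros [f Hf] HS.
  apply (I_mono I HI _ (fun z => exists n, (fun n z => exists t, P t /\ f t = n /\ S t z) n z)).
  { intros z [t [Pt St]]. exists (f t), t. auto. }
  apply I_unat; auto. intros n.
  destruct (classic (exists t, P t /\ f t = n)) as [[t [Pt Ht]] | Hn].
  - apply (I_mono I HI _ (S t)); auto.
    intros z [t' [Pt' [Ht' St']]]. assert (t' = t) by (apply Hf; congruence). subst; auto.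
  - apply I_empty; auto. intros z [t' [Pt' [Ht' _]]]. apply Hn; eauto.
Qed.

Lemma I_single0 I (HI : standing_assumptions I) : I (fun x => ~ x <> 0).
Proof.
  assert (Hb : borel (fun x => ~ x <> 0)).
  { apply borel_compl, borel_open. intros x Hx.
    assert (Hp : 0 < Rabs x) by (apply Rabs_pos_lt; auto).
    exists (mkposreal _ Hp). intros y Hy. simpl in Hy. unfold disc in Hy. simpl in Hy.
    intros ->. unfold Rminus in Hy. rewrite Rplus_0_l in Hy; rewrite Rabs_Ropp in Hy. lra. }
  apply NNPP; intros Hn.
  destruct (I_int I HI _ _ Hb Hb Hn Hn) as [a [b [Hab Hi]]].
  destruct (Hi ((2*a+b)/3)) as [u [v [Hu [Hv E1]]]]; [lra|].
  destruct (Hi ((a+2*b)/3)) as [u' [v' [Hu' [Hv' E2]]]]; [lra|].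
  apply NNPP in Hu, Hv, Hu', Hv'. subst. lra.
Qed.

Lemma I_single I (HI : standing_assumptions I) (a : R) : I (fun x => x = a).
Proof.
  apply (I_mono I HI _ (translate a (fun x => ~ x <> 0))).
  - intros x ->. exists 0. split; [intros H; apply H; reflexivity | ring].
  - apply I_transl; auto. apply I_single0; auto.
Qed.

Lemma I_ctbl I (HI : standing_assumptions I) (S : R -> Prop) : countable S -> I S.
Proof.
  intros Hc. apply (I_mono I HI _ (fun z => exists t, S t /\ (fun t x => x = t) t z)).
  - intros z Hz; exists z; auto.
  - apply I_uctbl; auto. intros; apply I_single; auto.
Qed.

Lemma R_unctbl I (HI : standing_assumptions I) : ~ countable (fun _ => True).
Proof. intros H. apply (I_full I HI). apply I_ctbl; auto. Qed.

Lemma ctbl_mink (A B : R -> Prop) : countable A -> countable B -> countable (minkowski A B).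
Proof.
  intros [f Hf] [g Hg].
  assert (Hc : forall z, {p : R * R | minkowski A B z -> A (fst p) /\ B (snd p) /\ z = fst p + snd p}).
  { intros z. apply constructive_indefinite_description.
    destruct (classic (minkowski A B z)) as [[a [b [Ha [Hb E]]]] | Hn].
    - exists (a, b); auto.
    - exists (0,0); intros H; contradiction. }
  exists (fun z => to_nat (f (fst (proj1_sig (Hc z))), g (snd (proj1_sig (Hc z))))).
  intros x y Hx Hy E.
  destruct (Hc x) as [[a b] Hab]; destruct (Hc y) as [[c d] Hcd]; cbn [fst snd proj1_sig] in *.
  destruct (Hab Hx) as [Ha [Hb ->]]; destruct (Hcd Hy) as [Hc' [Hd ->]].
  apply (f_equal of_nat) in E. rewrite !cancel_of_to in E. injection E; intros E2 E1.
  rewrite (Hf _ _ Ha Hc' E1); rewrite (Hg _ _ Hb Hd E2). reflexivity.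
Qed.

Lemma ctbl_nsum (A : R -> Prop) m : countable A -> countable (nsum m A).
Proof.
  intros H. induction m; simpl.
  - exists (fun _ => O). intros x y -> -> _; reflexivity.
  - apply ctbl_mink; auto.
Qed.

Lemma nsum_mono (A B : R -> Prop) m : (forall x, A x -> B x) -> forall s, nsum m A s -> nsum m B s.
Proof.
  intros H; induction m; simpl; auto.
  intros s [a [b [Ha [Hb E]]]]. exists a, b. auto.
Qed.

Lemma nsum_mult (A : R -> Prop) m y : A y -> nsum m A (INR m * y).
Proof.
  intros H; induction m; simpl.
  - ring.
  - exists (INR m * y), y. split; auto. split; auto. change (INR (S m) * y = INR m * y + y). rewrite S_INR; ring.
Qed.
Definition RT := R.
Definition eqR (x y : RT) : bool := if Req_EM_T x y then true else false.
Lemma eqRP : Equality.axiom eqR.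
Proof. move=> x y; rewrite /eqR; case: Req_EM_T => H; [by constructor | by constructor]. Qed.
HB.instance Definition _ := hasDecEq.Build RT eqRP.

Lemma wo_R : exists Rw : R -> R -> Prop,
  (forall P : R -> Prop, (exists x, P x) -> exists z, P z /\ forall y, P y -> Rw z y) /\
  (forall x y, Rw x y -> Rw y x -> x = y).
Proof.
have [Rb Hwo] := well_ordering_principle RT.
exists (fun x y => Rb x y); split.
- move=> P [x Px].
  have ne : nonempty (fun x : RT => `[< P x >]) by exists x; apply/asboolP.
  have [z [[Hz Hlb] _]] := Hwo _ ne.
  exists z; split; first by move: Hz => /asboolP.
  by move=> y Py; apply: Hlb; apply/asboolP.
- move=> x y Hxy Hyx.
  have ne : nonempty (fun z : RT => (z == x) || (z == y)) by exists x; rewrite /in_mem /= eqxx.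
  have [z [_ Hu]] := Hwo _ ne.
  have Hrefl : forall w : RT, Rb w w.
    move=> w; have ne1 : nonempty (fun z : RT => z == w) by exists w; rewrite /in_mem /= eqxx.
    have [m [[Hm Hlb] _]] := Hwo _ ne1.
    move: Hm; rewrite /in_mem /= => /eqP Hm; rewrite -{1}Hm; apply: Hlb; by rewrite /in_mem /= eqxx.
  have Ex : x = z.
    apply/esym; apply: Hu; split; first by rewrite /in_mem /= eqxx.
    by move=> w; rewrite /in_mem /= => /orP [/eqP -> | /eqP ->].
  have Ey : y = z.
    apply/esym; apply: Hu; split; first by rewrite /in_mem /= eqxx orbT.
    by move=> w; rewrite /in_mem /= => /orP [/eqP -> | /eqP ->].
  by rewrite Ex Ey.
Qed.

Lemma omega1 (HCH : CH) : exists lt : R -> R -> Prop, well_founded lt /\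
  (forall x y, lt x y \/ x = y \/ lt y x) /\ (forall x y z, lt x y -> lt y z -> lt x z) /\
  (forall x, countable (fun y => lt y x)).
Proof.
  destruct wo_R as [Rw [Hmin Hanti]].
  assert (Hrefl : forall x, Rw x x).
  { intros x. destruct (Hmin (fun y => y = x)) as [z [-> Hz]]; eauto. }
  assert (Htot : forall x y, Rw x y \/ Rw y x).
  { intros x y. destruct (Hmin (fun z => z = x \/ z = y)) as [z [[-> | ->] Hz]]; eauto. }
  assert (Htr : forall x y z, Rw x y -> Rw y z -> Rw x z).
  { intros x y z H1 H2. destruct (Hmin (fun w => w = x \/ w = y \/ w = z)) as [m [Hm Hz]]; eauto.
    destruct Hm as [-> | [-> | ->]].
    - apply Hz; auto.
    - assert (x = y) by (apply Hanti; auto; apply Hz; auto). subst; auto.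
    - assert (y = z) by (apply Hanti; auto; apply Hz; auto). subst; auto. }
  set (lt0 := fun x y => Rw x y /\ x <> y).
  assert (Hwf0 : well_founded lt0).
  { intros x. apply NNPP; intros Hx.
    destruct (Hmin (fun y => ~ Acc lt0 y)) as [z [Hz Hzm]]; eauto.
    apply Hz. constructor. intros y [Hyz Hne]. apply NNPP; intros Hy.
    apply Hne. apply Hanti; auto. }
  assert (Htri0 : forall x y, lt0 x y \/ x = y \/ lt0 y x).
  { intros x y. destruct (Req_dec x y) as [E|E]; auto.
    destruct (Htot x y); [left|right;right]; split; auto. }
  assert (Htr0 : forall x y z, lt0 x y -> lt0 y z -> lt0 x z).
  { intros x y z [H1 N1] [H2 N2]. split; eauto. intros ->. apply N1. apply Hanti; auto. }
  destruct (classic (forall x, countable (fun y => lt0 y x))) as [Hc | Hc].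
  { exists lt0. auto. }
  apply not_all_ex_not in Hc.
  destruct (Hmin (fun x => ~ countable (fun y => lt0 y x)) Hc) as [x0 [Hx0 Hx0m]].
  destruct (HCH (fun y => lt0 y x0)) as [Hcc | [h [Hh1 [Hh2 Hh3]]]]; [contradiction|].
  exists (fun a b => lt0 (h a) (h b)). split; [|split; [|split]].
  - apply (wf_inverse_image _ _ lt0 h Hwf0).
  - intros a b. destruct (Htri0 (h a) (h b)) as [H | [H | H]]; auto.
  - intros a b c; apply Htr0.
  - intros b. assert (Hb : countable (fun y => lt0 y (h b))).
    { apply NNPP; intros Hn. destruct (Hh1 b) as [Hr Hne]. apply Hne. apply Hanti; auto. }
    destruct Hb as [f Hf]. exists (fun a => f (h a)). intros a a' Ha Ha' E. apply Hh2. apply Hf; auto.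
Qed.

Definition Code := nat -> nat.
Definition child (t : Code) (k : nat) : Code := fun i => t (S (to_nat (k, i))).
Definition ctr (i : nat) : R :=
  (INR (fst (of_nat (fst (of_nat i)))) - INR (snd (of_nat (fst (of_nat i))))) / (INR (snd (of_nat i)) + 1).
Definition rad (i : nat) : R := / (INR (snd (of_nat i)) + 1).
Definition intv (i : nat) (x : R) : Prop := Rabs (x - ctr i) < rad i.

Inductive Dec : Code -> (R -> Prop) -> Prop :=
| Dopen t : t O = O -> Dec t (fun x => exists i, t (S i) = 1%nat /\ intv i x)
| Dcompl t A : t O = 1%nat -> Dec (child t O) A -> Dec t (fun x => ~ A x)
| Dunion t (f : nat -> R -> Prop) : t O = 2%nat -> (forall k, Dec (child t k) (f k)) ->
    Dec t (fun x => exists k, f k x).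

Lemma Dec_fun t A : Dec t A -> forall B, Dec t B -> A = B.
Proof.
  induction 1 as [t H0 | t A H0 HA IH | t f H0 Hf IH]; intros B HB; inversion HB; subst; try congruence.
  - match goal with H : Dec (child t O) _ |- _ => rewrite (IH _ H) end; reflexivity.
  - assert (E : f = f0) by (apply functional_extensionality; intros k; apply IH; auto).
    rewrite E; reflexivity.
Qed.

Lemma intv_approx (x delta : R) : 0 < delta -> exists i, intv i x /\ forall y, intv i y -> Rabs (y - x) < delta.
Proof.
  intros Hd.
  destruct (archimed (2 / delta)) as [Hup _].
  set (m := Z.to_nat (up (2 / delta))).
  assert (HM : 2 / delta < INR m + 1).
  { unfold m. destruct (Z_le_gt_dec 0 (up (2/delta))) as [Hz|Hz].
    - rewrite INR_IZR_INZ. rewrite Z2Nat.id; [lra | auto].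
    - assert (IZR (up (2/delta)) <= 0) by (apply IZR_le; lia).
      pose proof (pos_INR (Z.to_nat (up (2 / delta)))). lra. }
  set (M := INR m + 1).
  assert (HMp : 0 < M) by (unfold M; pose proof (pos_INR m); lra).
  destruct (archimed (x * M)) as [H1 H2].
  set (z := (up (x * M) - 1)%Z).
  assert (Hz1 : IZR z <= x * M) by (unfold z; rewrite minus_IZR; lra).
  assert (Hz2 : x * M < IZR z + 1) by (unfold z; rewrite minus_IZR; lra).
  set (a := Z.to_nat z). set (b := Z.to_nat (- z)).
  assert (Hab : INR a - INR b = IZR z).
  { unfold a, b. destruct (Z_le_gt_dec 0 z) as [Hz|Hz].
    - rewrite !INR_IZR_INZ. rewrite Z2Nat.id; [|auto].
      replace (Z.to_nat (- z)) with O by lia. simpl. lra.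
    - rewrite !INR_IZR_INZ. replace (Z.to_nat z) with O by lia.
      rewrite Z2Nat.id; [|lia]. rewrite opp_IZR. simpl. lra. }
  exists (to_nat (to_nat (a, b), m)).
  unfold intv, ctr, rad. rewrite !cancel_of_to. simpl fst. simpl snd. rewrite Hab.
  fold M.
  assert (HiM : 0 < / M) by (apply Rinv_0_lt_compat; auto).
  assert (Hx : Rabs (x - IZR z / M) < / M).
  { assert (E : x - IZR z / M = (x*M - IZR z) * / M) by (field; lra).
    rewrite E. apply Rabs_def1.
    - rewrite <- (Rmult_1_l (/ M)) at 2. apply Rmult_lt_compat_r; lra.
    - apply Rlt_le_trans with 0; [lra|]. apply Rmult_le_pos; lra. }
  split; auto.
  intros y Hy.
  assert (H2M : 2 / M < delta).
  { assert (H2d : 2 < delta * M).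
    { replace 2 with (delta * (2 / delta)) by (field; lra). apply Rmult_lt_compat_l; auto. }
    replace delta with (delta * M * / M) by (field; lra).
    unfold Rdiv. apply Rmult_lt_compat_r; auto. }
  replace (y - x) with ((y - IZR z / M) - (x - IZR z / M)) by ring.
  eapply Rle_lt_trans; [apply Rabs_triang|]. rewrite Rabs_Ropp.
  assert (/ M + / M = 2 / M) by (field; lra). lra.
Qed.

Lemma open_code (A : R -> Prop) : open_set A -> exists t, Dec t A.
Proof.
  intros HA.
  set (t := fun n => match n with O => O | S i =>
        if excluded_middle_informative (forall y, intv i y -> A y) then 1%nat else O end).
  exists t.
  assert (E : A = (fun x => exists i, t (S i) = 1%nat /\ intv i x)).
  { apply functional_extensionality; intros x; apply propositional_extensionality; split.
    - intros Hx. destruct (HA x Hx) as [[d Hd] Hn]. simpl in Hn.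
      destruct (intv_approx x d Hd) as [i [Hi Hiy]]. exists i. split; auto.
      unfold t. destruct excluded_middle_informative as [Hy0|Hno]; auto.
      exfalso; apply Hno. intros y Hy. apply Hn. unfold disc; simpl. apply Hiy; auto.
    - intros [i [Hi Hx]]. unfold t in Hi.
      destruct excluded_middle_informative as [Hyes|Hno]; [apply Hyes; auto | discriminate]. }
  rewrite E. apply Dopen. reflexivity.
Qed.

Lemma borel_code (A : R -> Prop) : borel A -> exists t, Dec t A.
Proof.
  induction 1 as [A HA | A HA [t' Ht'] | f Hf IH].
  - apply open_code; auto.
  - exists (fun n => match n with O => 1%nat | S p => t' (snd (of_nat p)) end).
    apply Dcompl; auto.
    replace (child _ O) with t'; auto.
    apply functional_extensionality; intros i. unfold child. rewrite cancel_of_to. reflexivity.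
  - destruct (choice (fun k t => Dec t (f k)) IH) as [g Hg].
    exists (fun n => match n with O => 2%nat | S p => g (fst (of_nat p)) (snd (of_nat p)) end).
    apply Dunion; auto. intros k.
    replace (child _ k) with (g k); auto.
    apply functional_extensionality; intros i. unfold child. rewrite cancel_of_to. reflexivity.
Qed.

Definition enc (t : Code) (n : nat) : bool := Nat.eqb (t (fst (of_nat n))) (snd (of_nat n)).

Lemma enc_inj t t' : (forall n, enc t n = enc t' n) -> t = t'.
Proof.
  intros H. apply functional_extensionality; intros i.
  specialize (H (to_nat (i, t i))). unfold enc in H. rewrite cancel_of_to in H. simpl in H.
  rewrite Nat.eqb_refl in H. symmetry in H. apply Nat.eqb_eq in H. auto.
Qed.

Fixpoint psum (b : nat -> bool) (N : nat) : R :=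
  match N with O => 0 | S N' => psum b N' + (if b N' then 2 / 3 ^ (S N') else 0) end.

Lemma pow3_pos N : 0 < 3 ^ N.
Proof. apply pow_lt; lra. Qed.

Lemma psum_step b N : psum b N <= psum b (S N) <= psum b N + 2 / 3 ^ (S N).
Proof.
  simpl. pose proof (pow3_pos N). assert (0 < 2 / (3 * 3 ^ N)) by (apply Rdiv_lt_0_compat; lra).
  destruct (b N); lra.
Qed.

Lemma psum_tail b N M : (N <= M)%nat -> psum b N <= psum b M <= psum b N + / 3 ^ N - / 3 ^ M.
Proof.
  induction 1 as [|M HNM IH]; [lra|].
  pose proof (psum_step b M). pose proof (pow3_pos M).
  assert (E : 2 / 3 ^ (S M) = / 3 ^ M - / 3 ^ (S M)) by (simpl; field; lra).
  lra.
Qed.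

Lemma psum_le b N M : psum b M <= psum b N + / 3 ^ N.
Proof.
  destruct (Nat.le_gt_cases N M) as [H|H].
  - pose proof (psum_tail b N M H). pose proof (pow3_pos M).
    assert (0 < / 3 ^ M) by (apply Rinv_0_lt_compat; auto). lra.
  - assert (HMN : (M <= N)%nat) by lia. pose proof (psum_tail b M N HMN).
    pose proof (pow3_pos N). assert (0 < / 3 ^ N) by (apply Rinv_0_lt_compat; auto). lra.
Qed.

Definition cant (b : nat -> bool) : R.
Proof.
  refine (proj1_sig (completeness (fun r => exists N, r = psum b N) _ _)).
  - exists (psum b O + / 3 ^ O). intros r [N ->]. apply psum_le.
  - exists 0. exists O. reflexivity.
Defined.

Lemma cant_spec b N : psum b N <= cant b <= psum b N + / 3 ^ N.
Proof.
  unfold cant. destruct completeness as [m [Hub Hlub]]. simpl. split.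
  - apply Hub. exists N; auto.
  - apply Hlub. intros r [M ->]. apply psum_le.
Qed.

Lemma least_nat (P : nat -> Prop) : (exists n, P n) -> exists n, P n /\ forall m, (m < n)%nat -> ~ P m.
Proof.
  intros [n Hn]. revert Hn. induction n as [n IH] using (well_founded_induction lt_wf).
  intros Hn. destruct (classic (exists m, (m < n)%nat /\ P m)) as [[m [Hm Pm]]|Hno].
  - apply (IH m Hm Pm).
  - exists n. split; auto. intros m Hm Pm. apply Hno; eauto.
Qed.

Lemma psum_agree b b' N : (forall m, (m < N)%nat -> b m = b' m) -> psum b N = psum b' N.
Proof.
  induction N; simpl; auto. intros H. rewrite IHN; [|intros; apply H; lia].
  rewrite (H N); auto.
Qed.

Lemma cant_inj b b' : cant b = cant b' -> forall n, b n = b' n.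
Proof.
  intros E. apply NNPP; intros Hn. apply not_all_ex_not in Hn.
  destruct (least_nat _ Hn) as [k [Hk Hmin]].
  assert (Hagree : psum b k = psum b' k).
  { apply psum_agree. intros m Hm. apply NNPP. apply Hmin; auto. }
  pose proof (pow3_pos k).
  assert (0 < / 3 ^ S k) by (apply Rinv_0_lt_compat; apply pow3_pos).
  destruct (cant_spec b (S k)) as [Hb1 Hb2]. destruct (cant_spec b' (S k)) as [Hb1' Hb2'].
  simpl psum in Hb1, Hb2, Hb1', Hb2'. rewrite Hagree in Hb1, Hb2.
  assert (E4 : 2 / (3 * 3 ^ k) = 2 * / 3 ^ S k) by reflexivity.
  rewrite E4 in Hb1, Hb2, Hb1', Hb2'. set (w := / 3 ^ S k) in *.
  destruct (b k), (b' k); try congruence; lra.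
Qed.

Definition cinj (t : Code) : R := cant (enc t).

Lemma cinj_inj t t' : cinj t = cinj t' -> t = t'.
Proof. intros E. apply enc_inj. apply cant_inj. exact E. Qed.

Lemma ctbl_le (lt : R -> R -> Prop) r0 : countable (fun y => lt y r0) -> countable (fun y => lt y r0 \/ y = r0).
Proof.
  intros [f Hf]. exists (fun w => if excluded_middle_informative (w = r0) then O else S (f w)).
  intros x y Hx Hy E.
  destruct (excluded_middle_informative (x = r0)) as [E1|E1];
  destruct (excluded_middle_informative (y = r0)) as [E2|E2]; try congruence.
  all: simpl in E; try congruence.
  injection E; intros E'. apply Hf; auto; [destruct Hx|destruct Hy]; tauto.
Qed.

Section Construction.
Variable I : (R -> Prop) -> Prop.
Hypothesis HI : standing_assumptions I.
Variable lt : R -> R -> Prop.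
Hypothesis Hwf : well_founded lt.
Hypothesis Htri : forall x y, lt x y \/ x = y \/ lt y x.
Hypothesis Htr : forall x y z, lt x y -> lt y z -> lt x z.
Hypothesis Hct : forall x, countable (fun y => lt y x).
Variable n : nat.
Hypothesis Hn : (1 <= n)%nat.

Definition Img (P : R -> Prop) (g : R -> R) : R -> Prop :=
  fun v => exists w, P w /\ (v = g w \/ v = w - INR n * g w).

Lemma Img_ctbl P g : countable P -> countable (Img P g).
Proof.
  intros [f Hf].
  assert (Hc : forall v, {w : R | Img P g v -> P w /\ (v = g w \/ v = w - INR n * g w)}).
  { intros v. apply constructive_indefinite_description.
    destruct (classic (Img P g v)) as [[w Hw]|Hno]; [exists w; auto | exists 0; tauto]. }
  exists (fun v => to_nat (f (proj1_sig (Hc v)),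
                  if excluded_middle_informative (v = g (proj1_sig (Hc v))) then O else 1%nat)).
  intros v v' Hv Hv' E.
  destruct (Hc v) as [w Hw]; destruct (Hc v') as [w' Hw']; cbn [proj1_sig] in E.
  apply (f_equal of_nat) in E. rewrite !cancel_of_to in E. injection E; intros E2 E1.
  destruct (Hw Hv) as [Pw Hvw]; destruct (Hw' Hv') as [Pw' Hvw'].
  assert (w = w') by (apply Hf; auto). subst w'.
  destruct (excluded_middle_informative (v = g w)) as [A1|A1];
  destruct (excluded_middle_informative (v' = g w)) as [A2|A2]; simpl in E2; try discriminate.
  - congruence.
  - destruct Hvw as [H|H]; [contradiction|]. destruct Hvw' as [H'|H']; [contradiction|]. congruence.
Qed.

Definition Dset (r : R) : R -> Prop :=
  fun z => exists c A, cinj c = r /\ Dec c A /\ I A /\ A z.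

Lemma Dset_I r : I (Dset r).
Proof.
  destruct (classic (exists c A, cinj c = r /\ Dec c A /\ I A)) as [[c [A [Hc [HA HIA]]]]|Hno].
  - apply (I_mono I HI _ A); auto.
    intros z [c' [A' [Hc' [HA' [_ Hz]]]]].
    assert (c' = c) by (apply cinj_inj; congruence). subst c'.
    rewrite (Dec_fun _ _ HA _ HA'). auto.
  - apply I_empty; auto. intros z [c [A [H1 [H2 [H3 _]]]]]. apply Hno; eauto.
Qed.

Lemma Dset_cof A : I A -> exists r, forall z, A z -> Dset r z.
Proof.
  intros HA. destruct (I_cover I HI A HA) as [B [HB [HIB HAB]]].
  destruct (borel_code B HB) as [c Hc].
  exists (cinj c). intros z Hz. exists c, B. repeat split; auto.
Qed.

Definition Cset (x : R) : R -> Prop := fun z => exists r, lt r x /\ Dset r z.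

Lemma Cset_I x : I (Cset x).
Proof. unfold Cset. apply (I_uctbl I HI (fun r => lt r x) Dset); [apply Hct | intros; apply Dset_I]. Qed.

Definition Bad (x : R) (A : R -> Prop) : R -> Prop :=
  fun y => exists m j k t, (1 <= m <= n)%nat /\ (1 <= j + k <= m)%nat /\ nsum (m - j - k) A t /\
    Cset x (INR j * y + INR k * (x - INR n * y) + t).

Lemma Bad_I x A : countable A -> I (Bad x A).
Proof.
  intros HA.
  apply (I_mono I HI _ (fun y => exists m, (fun m y => exists j, (fun j y => exists k,
     (fun k y => exists t, nsum (m - j - k) A t /\
        (fun t y => (1 <= m <= n)%nat /\ (1 <= j + k <= m)%nat /\
            Cset x (INR j * y + INR k * (x - INR n * y) + t)) t y) k y) j y) m y)).
  { intros y [m [j [k [t [H1 [H2 [H3 H4]]]]]]]. exists m, j, k, t. auto. }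
  apply I_unat; auto; intros m. apply I_unat; auto; intros j. apply I_unat; auto; intros k.
  apply I_uctbl; auto. { apply ctbl_nsum; auto. }
  intros t _.
  destruct (classic ((1 <= m <= n)%nat /\ (1 <= j + k <= m)%nat)) as [[Hm Hjk]|Hno].
  2:{ apply I_empty; auto. intros y [H1 [H2 _]]. tauto. }
  set (a := INR j - INR k * INR n). set (d := INR k * x + t).
  assert (Ha : a <> 0).
  { unfold a. destruct k as [|k'].
    - simpl. assert (0 < INR j) by (apply lt_0_INR; lia). lra.
    - assert (INR j < INR (S k' * n)) by (apply lt_INR; nia). rewrite mult_INR in H. lra. }
  apply (I_mono I HI _ (dilate (/ a) (translate (- d) (Cset x)))).
  - intros y [_ [_ Hy]]. exists (a * y). split.
    + exists (INR j * y + INR k * (x - INR n * y) + t). split; auto. unfold a, d; ring.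
    + field; auto.
  - apply I_dil; auto. apply I_transl; auto. apply Cset_I.
Qed.

Lemma exY x A : countable A -> exists y, ~ Bad x A y.
Proof.
  intros HA. apply NNPP; intros Hno. apply (I_full I HI).
  apply (I_mono I HI _ (Bad x A)); [|apply Bad_I; auto].
  intros y _. apply NNPP; intros Hy. apply Hno; eauto.
Qed.

Definition ext (x : R) (rec : forall w, lt w x -> R) : R -> R :=
  fun w => match excluded_middle_informative (lt w x) with left h => rec w h | right _ => 0 end.

Lemma lt_ctbl x : countable (fun w => lt w x).
Proof. apply Hct. Qed.

Definition Fstep (x : R) (rec : forall w, lt w x -> R) : R :=
  proj1_sig (constructive_indefinite_description _
    (exY x (Img (fun w => lt w x) (ext x rec)) (Img_ctbl _ _ (lt_ctbl x)))).

Definition Y : R -> R := Fix Hwf (fun _ => R) Fstep.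

Lemma Y_eq x : Y x = Fstep x (fun w _ => Y w).
Proof.
  unfold Y. apply (Fix_eq Hwf (fun _ => R) Fstep). intros x' f g Hfg.
  assert (f = g) by (apply functional_extensionality_dep; intros w;
                     apply functional_extensionality_dep; intros h; apply Hfg).
  subst; reflexivity.
Qed.

Definition Lset (P : R -> Prop) : R -> Prop := Img P Y.

Lemma Y_good x : ~ Bad x (Lset (fun w => lt w x)) (Y x).
Proof.
  rewrite Y_eq. unfold Fstep.
  destruct constructive_indefinite_description as [y Hy]. simpl.
  replace (Lset (fun w => lt w x)) with (Img (fun w => lt w x) (ext x (fun w _ => Y w))); auto.
  apply functional_extensionality; intros v; apply propositional_extensionality.
  unfold Img, Lset, ext. split; intros [w [Hw Hv]]; exists w; split; auto;
    destruct excluded_middle_informative; tauto.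
Qed.

Lemma decomp (A : R -> Prop) y z m s :
  nsum m (fun w => A w \/ w = y \/ w = z) s ->
  nsum m A s \/ exists j k t, (1 <= j + k <= m)%nat /\ nsum (m - j - k) A t /\
     s = INR j * y + INR k * z + t.
Proof.
  revert s; induction m as [|m IH]; intros s Hs.
  - left; exact Hs.
  - destruct Hs as [s' [w [Hs' [Hw ->]]]].
    destruct (IH s' Hs') as [H1 | [j [k [t [Hjk [Ht ->]]]]]].
    + destruct Hw as [Hw | [-> | ->]].
      * left. exists s', w. auto.
      * right. exists 1%nat, O, s'. split; [lia|]. split.
        { replace (S m - 1 - 0)%nat with m by lia. auto. }
        simpl. ring.
      * right. exists O, 1%nat, s'. split; [lia|]. split.
        { replace (S m - 0 - 1)%nat with m by lia. auto. }
        simpl. ring.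
    + destruct Hw as [Hw | [-> | ->]].
      * right. exists j, k, (t + w). split; [lia|]. split.
        { replace (S m - j - k)%nat with (S (m - j - k)) by lia. exists t, w. auto. }
        ring.
      * right. exists (S j), k, t. split; [lia|]. split.
        { replace (S m - S j - k)%nat with (m - j - k)%nat by lia. auto. }
        rewrite S_INR. ring.
      * right. exists j, (S k), t. split; [lia|]. split.
        { replace (S m - j - S k)%nat with (m - j - k)%nat by lia. auto. }
        rewrite S_INR. ring.
Qed.

Definition le (x w : R) : Prop := lt w x \/ w = x.

Lemma le_sub x w : lt x w -> forall u, le x u -> le w u.
Proof. intros H u [Hu | ->]; left; eauto. Qed.

Lemma Lset_mono (P Q : R -> Prop) : (forall w, P w -> Q w) -> forall v, Lset P v -> Lset Q v.
Proof. intros H v [w [Hw Hv]]. exists w; auto. Qed.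

Lemma maxstage (P : R -> Prop) m s : nsum m (Lset P) s ->
  nsum m (Lset (fun _ => False)) s \/ exists x, P x /\ nsum m (Lset (le x)) s.
Proof.
  revert s; induction m as [|m IH]; intros s Hs.
  - left; exact Hs.
  - destruct Hs as [s' [v [Hs' [[w [Pw Hvw]] ->]]]].
    right.
    destruct (IH s' Hs') as [H1 | [x [Px H1]]].
    + exists w. split; auto. exists s', v. split.
      * apply (nsum_mono _ _ m (Lset_mono _ _ (fun _ (f : False) => match f with end))); auto.
      * split; auto. exists w. split; auto. right; auto.
    + destruct (Htri x w) as [Hxw | [<- | Hwx]].
      * exists w. split; auto. exists s', v. split.
        { apply (nsum_mono _ _ m (Lset_mono _ _ (le_sub x w Hxw))); auto. }
        split; auto. exists w. split; auto. right; auto.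
      * exists x. split; auto. exists s', v. split; auto. split; auto. exists x. split; auto. right; auto.
      * exists x. split; auto. exists s', v. split; auto. split; auto. exists w. split; auto. left; auto.
Qed.

Lemma claim r0 m : (1 <= m <= n)%nat -> forall x s, nsum m (Lset (le x)) s -> Dset r0 s ->
  nsum m (Lset (le r0)) s.
Proof.
  intros Hm x. induction x as [x IH] using (well_founded_induction Hwf).
  intros s Hs HD.
  destruct (Htri x r0) as [Hx | [<- | Hx]].
  - apply (nsum_mono _ _ m (Lset_mono _ _ (le_sub x r0 Hx))); auto.
  - auto.
  - assert (Hs2 : nsum m (fun w => Lset (fun w => lt w x) w \/ w = Y x \/ w = x - INR n * Y x) s).
    { refine (nsum_mono _ _ m _ s Hs).
      intros u [w [[Hw | ->] Hv]]; [left; exists w; auto | right; tauto]. }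
    destruct (decomp _ _ _ _ _ Hs2) as [H1 | [j [k [t [Hjk [Ht Es]]]]]].
    + destruct (maxstage _ _ _ H1) as [H2 | [x' [Hx' H2]]].
      * apply (nsum_mono _ _ m (Lset_mono _ _ (fun _ (f : False) => match f with end))); auto.
      * apply (IH x'); auto.
    + exfalso. apply (Y_good x). exists m, j, k, t. split; auto. split; auto. split; auto.
      exists r0. split; auto. rewrite <- Es. auto.
Qed.

Definition Lfin : R -> Prop := Lset (fun _ => True).

Lemma luzin_part m A : (1 <= m <= n)%nat -> I A -> countable (fun s => nsum m Lfin s /\ A s).
Proof.
  intros Hm HA. destruct (Dset_cof A HA) as [r0 Hr0].
  apply (ctbl_sub _ (nsum m (Lset (le r0)))).
  - intros s [Hs HAs]. destruct (maxstage _ _ _ Hs) as [H2 | [x [_ H2]]].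
    + apply (nsum_mono _ _ m (Lset_mono _ _ (fun _ (f : False) => match f with end))); auto.
    + apply (claim r0 m Hm x); auto.
  - apply ctbl_nsum. apply Img_ctbl. apply ctbl_le. apply Hct.
Qed.

Lemma Lfin_sum z : nsum (S n) Lfin z.
Proof.
  exists (INR n * Y z), (z - INR n * Y z). split; [|split].
  - apply nsum_mult. exists z. split; auto.
  - exists z. split; auto.
  - ring.
Qed.

End Construction.

Lemma ctbl_from_nsum (L : R -> Prop) n : (1 <= n)%nat -> (exists l0, L l0) -> countable (nsum n L) -> countable L.
Proof.
  intros Hn [l0 Hl0] [f Hf]. destruct n as [|n']; [lia|].
  pose proof (nsum_mult L n' l0 Hl0) as Hm.
  exists (fun v => f (INR n' * l0 + v)). intros v v' Hv Hv' E.
  assert (E2 : INR n' * l0 + v = INR n' * l0 + v').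
  { apply Hf; auto; [exists (INR n' * l0), v | exists (INR n' * l0), v']; auto. }
  lra.
Qed.

Theorem mainTheorem15 (HCH : CH) (I : (R -> Prop) -> Prop)
  (HI : standing_assumptions I) (n : nat) (hn : (1 <= n)%nat) :
  exists L : R -> Prop,
    luzin I L /\ luzin I (nsum n L) /\ (forall z, nsum (S n) L z).
Proof.
  destruct (omega1 HCH) as [lt [Hwf [Htri [Htr Hct]]]].
  exists (Lfin I HI lt Hwf Hct n hn).
  set (L := Lfin I HI lt Hwf Hct n hn).
  assert (Hall : forall z, nsum (S n) L z) by (intros z; apply Lfin_sum).
  assert (Hunc : ~ countable L).
  { intros HL. apply (R_unctbl I HI). apply (ctbl_sub _ (nsum (S n) L)).
    - intros z _; apply Hall.
    - apply ctbl_nsum; auto. }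
  assert (Hne : exists l0, L l0).
  { destruct (Hall 0) as [a [b [_ [Hb _]]]]. eauto. }
  assert (Hunc2 : ~ countable (nsum n L)).
  { intros Hc. apply Hunc. apply (ctbl_from_nsum L n hn Hne Hc). }
  split; [|split; auto].
  - split.
    + destruct (HCH L) as [H|H]; [contradiction | exact H].
    + intros A HA. apply (ctbl_sub _ (fun s => nsum 1 L s /\ A s)).
      * intros x [Hx HAx]. split; auto. exists 0, x. split; [reflexivity|]. split; auto. ring.
      * apply (luzin_part I HI lt Hwf Htri Htr Hct n hn 1 A); auto; lia.
  - split.
    + destruct (HCH (nsum n L)) as [H|H]; [contradiction | exact H].
    + intros A HA. apply (luzin_part I HI lt Hwf Htri Htr Hct n hn n A); auto; lia.
Qed.
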